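(* As formal power series, coefficientwise modulo $4$, \[ \sum_{n=0}^\infty pl_4(n)q^n\equiv (1+q+2q^2+q^3+3q^5+2q^6+3q^7+3q^8)\sum_{n=0}^\infty pl_2(n)q^{2n}\pmod 4. \]
   Context: For a positive integer $k$, $pl_k(n)$ denotes the number of $k$-component plane partitions of $n$ (plane partitions of $n$ all of whose entries are $\le k$), with $pl_k(0)=1$ and $pl_k(n)=0$ for $n<0$; equivalently $\sum_{n\ge0}pl_k(n)q^n=\prod_{n=1}^{\infty}(1-q^n)^{-\min(k,n)}$. *)

(* Defs.v *)
From HB Require Import structures.
From mathcomp Require Import all_boot all_order all_algebra.
Set Implicit Arguments. Unset Strict Implicit. Unset Printing Implicit Defensive.
Import GRing.Theory Num.Theory.
Local Open Scope ring_scope.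

(* Truncation at degree n of prod_{m>=1} (1-q^m)^{-min(k,m)}:
   prod_{m=1}^{n} (sum_{j=0}^{n} q^(m j))^(min(k,m)).
   Its coefficient of q^n equals that of the full infinite product,
   since all omitted terms have degree > n. *)
Definition pl_trunc (k n : nat) : {poly int} :=
  \prod_(1 <= m < n.+1) (\sum_(j < n.+1) 'X^(m * j)) ^+ (minn k m).

(* pl_k(n): number of k-component plane partitions of n, defined by the
   generating function  sum_n pl_k(n) q^n = prod_{n>=1} (1-q^n)^{-min(k,n)}. *)
Definition pl (k n : nat) : int := (pl_trunc k n)`_n.

Definition cpoly : seq int := [:: 1; 1; 2; 1; 0; 3; 2; 3; 3].

Definition pl2_even (n : nat) : int := if odd n then 0 else pl 2 n./2.

Definition rhs_coef (n : nat) : int :=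
  \sum_(i < 9 | (i <= n)%N) cpoly`_i * pl2_even (n - i).

(* Main.v *)
Require Import Defs.
From mathcomp Require Import all_boot all_order all_algebra.
From mathcomp Require Import ring.
Set Implicit Arguments. Unset Strict Implicit. Unset Printing Implicit Defensive.
Import GRing.Theory Num.Theory.
Local Open Scope ring_scope.

Definition eqm {R : comNzRingType} (N : nat) (p q : {poly R}) :=
  forall i, (i <= N)%N -> p`_i = q`_i.

Definition geo {R : comNzRingType} (N m : nat) : {poly R} := \sum_(j < N.+1) 'X^(m * j).
Definition trunc {R : comNzRingType} (k N : nat) : {poly R} :=
  \prod_(1 <= m < N.+1) (geo N m) ^+ (minn k m).
Definition U {R : comNzRingType} (k N : nat) : {poly R} :=
  \prod_(1 <= m < N.+1) (1 - 'X^m) ^+ (minn k m).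

Lemma eqm_refl {R : comNzRingType} N (p : {poly R}) : eqm N p p.
Proof. by []. Qed.
Lemma eqm_sym {R : comNzRingType} N (p q : {poly R}) : eqm N p q -> eqm N q p.
Proof. by move=> h i hi; rewrite h. Qed.
Lemma eqm_trans {R : comNzRingType} N (p q r : {poly R}) : eqm N p q -> eqm N q r -> eqm N p r.
Proof. by move=> h1 h2 i hi; rewrite h1 // h2. Qed.
Lemma eqm_le {R : comNzRingType} M N (p q : {poly R}) : (M <= N)%N -> eqm N p q -> eqm M p q.
Proof. by move=> hMN h i hi; apply: h; apply: leq_trans hMN. Qed.

Lemma eqm_mul {R : comNzRingType} N (p p' q q' : {poly R}) :
  eqm N p p' -> eqm N q q' -> eqm N (p * q) (p' * q').
Proof.
move=> hp hq i hi; rewrite !coefM; apply: eq_bigr => j _.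
have hj : (j <= i)%N by rewrite -ltnS.
rewrite hp ?hq //; [exact: leq_trans (leq_subr _ _) hi | exact: leq_trans hj hi].
Qed.

Lemma eqm_exp {R : comNzRingType} N (p q : {poly R}) k : eqm N p q -> eqm N (p ^+ k) (q ^+ k).
Proof. by move=> h; elim: k => [|k IH]; rewrite ?expr0 // !exprS; apply: eqm_mul. Qed.

Lemma eqm_prod {R : comNzRingType} N a b (F G : nat -> {poly R}) :
  (forall m, (a <= m < b)%N -> eqm N (F m) (G m)) ->
  eqm N (\prod_(a <= m < b) F m) (\prod_(a <= m < b) G m).
Proof.
move=> h; rewrite big_nat_cond [X in eqm _ _ X]big_nat_cond.
elim/big_rec2: _ => // m y1 y2 /andP[hm _] hy; apply: eqm_mul => //; exact: h.
Qed.

Lemma geo_inv {R : comNzRingType} N m : (0 < m)%N ->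
  eqm N ((1 - 'X^m) * (geo N m : {poly R})) 1.
Proof.
move=> hm.
have -> : (1 - 'X^m) * (geo N m : {poly R}) = 1 - 'X^(m * N.+1).
  rewrite mulrBl mul1r /geo big_distrr /=.
  have e : forall i : 'I_N.+1, 'X^m * 'X^(m * i) = 'X^(m * i.+1) :> {poly R} by move=> i; rewrite -exprD mulnS.
  rewrite (eq_bigr _ (fun i _ => e i)).
  rewrite big_ord_recl [X in _ - X]big_ord_recr /= muln0 expr0.
  have -> : \sum_(i < N) 'X^(m * bump 0 i) = \sum_(i < N) 'X^(m * i.+1) :> {poly R}
    by apply: eq_bigr => i _; rewrite /bump add1n.
  set s := \sum_(i < N) _; set x := 'X^(m * N.+1); ring.
move=> i hi; rewrite coefB coefXn.
have -> : (i == m * N.+1) = false.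
  apply/negbTE; rewrite neq_ltn; apply/orP; left.
  apply: (leq_trans (n := N.+1)) => //; exact: leq_pmull.
by rewrite subr0.
Qed.

Lemma trunc_inv {R : comNzRingType} k N : eqm N ((trunc k N : {poly R}) * U k N) 1.
Proof.
rewrite /trunc /U -big_split /=.
apply: (@eqm_trans _ _ _ (\prod_(1 <= m < N.+1) 1)); last by rewrite big1.
apply: eqm_prod => m /andP[hm _].
rewrite -exprMn_comm; last exact: mulrC.
rewrite -[X in eqm _ _ X](expr1n _ (minn k m)); apply: eqm_exp; rewrite mulrC; exact: geo_inv.
Qed.

Lemma U_shift {R : comNzRingType} k i N : (i <= N)%N -> eqm i (U k N : {poly R}) (U k i).
Proof.
move=> hiN; rewrite /U (@big_cat_nat _ _ _ i.+1) //=.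
rewrite -[X in eqm _ _ X]mulr1; apply: eqm_mul => //.
apply: (@eqm_trans _ _ _ (\prod_(i.+1 <= m < N.+1) 1)); last by rewrite big1.
apply: eqm_prod => m /andP[hm _].
rewrite -[X in eqm _ _ X](expr1n _ (minn k m)); apply: eqm_exp.
move=> j hj; rewrite coefB coefXn coef1.
have -> : (j == m) = false by apply/negbTE; rewrite neq_ltn (leq_ltn_trans hj hm).
by rewrite subr0.
Qed.

Lemma eqm_uniq {R : comNzRingType} N (a b u : {poly R}) :
  eqm N (a * u) 1 -> eqm N (b * u) 1 -> eqm N a b.
Proof.
move=> ha hb.
apply: (@eqm_trans _ _ _ (a * (b * u))).
  by rewrite -[X in eqm _ X _]mulr1; apply: eqm_mul => //; apply: eqm_sym.
rewrite mulrA [a * b]mulrC -mulrA -[X in eqm _ _ X]mulr1; exact: eqm_mul.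
Qed.

Lemma trunc_stable {R : comNzRingType} k i N : (i <= N)%N ->
  eqm i (trunc k N : {poly R}) (trunc k i).
Proof.
move=> hiN; apply: (@eqm_uniq _ _ _ _ (U k i)); last exact: trunc_inv.
apply: (@eqm_trans _ _ _ (trunc k N * U k N)).
  by apply: eqm_mul => //; apply: eqm_sym; exact: U_shift.
exact: (eqm_le hiN (@trunc_inv R k N)).
Qed.

Lemma eqm_comp2 {R : comNzRingType} N (p q : {poly R}) :
  eqm N p q -> eqm N (p \Po 'X^2) (q \Po 'X^2).
Proof.
move=> h i hi; rewrite !coef_comp_poly_Xn //; case: ifP => // _.
by apply: h; apply: leq_trans (leq_div _ _) hi.
Qed.

Lemma comp_exp {R : comNzRingType} (p q : {poly R}) k : (p ^+ k) \Po q = (p \Po q) ^+ k.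
Proof. by elim: k => [|k IH]; rewrite ?expr0 ?comp_polyC // !exprS comp_polyM IH. Qed.

Lemma comp_1X {R : comNzRingType} m : ((1 - 'X^m) \Po 'X^2 : {poly R}) = 1 - 'X^(2 * m).
Proof. by rewrite comp_polyB comp_polyC comp_Xn_poly -exprM mulnC. Qed.

Lemma four0 : (4%:R : {poly 'Z_4}) = 0.
Proof. have h : (4%:R : 'Z_4) = 0 by apply/val_inj. by rewrite -polyC_natr h. Qed.

Lemma comp1 {R : comNzRingType} (q : {poly R}) : 1 \Po q = 1.
Proof. by rewrite -polyC1 comp_polyC. Qed.

Definition Cp : {poly 'Z_4} :=
  1 + 'X + 2%:R * 'X^2 + 'X^3 + 3%:R * 'X^5 + 2%:R * 'X^6 + 3%:R * 'X^7 + 3%:R * 'X^8.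

Lemma four_trick (q a b : {poly 'Z_4}) : a = b + 4%:R * q -> a = b.
Proof. by move=> ->; rewrite four0 mul0r addr0. Qed.

Lemma base_id : Cp * U 4 3 = U 2 3 \Po 'X^2.
Proof.
rewrite /U big_ltn // big_ltn // big_ltn // big_geq //.
rewrite big_ltn // big_ltn // big_ltn // big_geq //= !comp_polyM !comp_exp !comp_1X comp1.
refine (@four_trick (- 'X^3 + 2%:R * 'X^5 + 2%:R * 'X^6 - 5%:R * 'X^8 - 3%:R * 'X^9 + 2%:R * 'X^10
  + 5%:R * 'X^11 + 4%:R * 'X^12 - 4%:R * 'X^13 - 5%:R * 'X^14 - 2%:R * 'X^15 + 3%:R * 'X^16
  + 5%:R * 'X^17 - 2%:R * 'X^19 - 2%:R * 'X^20 + 'X^22) _ _ _).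
rewrite /Cp /minn /=.
ring.
Qed.

Lemma step_id (N : nat) : Cp * U 4 N.+3 = U 2 N.+3 \Po 'X^2.
Proof.
elim: N => [|N IH]; first exact: base_id.
rewrite /U big_nat_recr //= [X in _ = X \Po _]big_nat_recr //= comp_polyM comp_exp comp_1X.
rewrite mulrA -/(U 4 N.+3) -/(U 2 N.+3) IH.
have -> : minn 4 N.+4 = 4 by apply/minn_idPl.
have -> : minn 2 N.+4 = 2 by apply/minn_idPl.
congr (_ * _); rewrite mulnC exprM.
refine (@four_trick (- 'X^(N.+4) + 2%:R * ('X^(N.+4))^+2 - ('X^(N.+4))^+3) _ _ _).
ring.
Qed.

Definition phi (z : int) : 'Z_4 := z%:~R.

Lemma map_trunc k n : map_poly phi (pl_trunc k n) = trunc k n.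
Proof.
rewrite /pl_trunc /trunc rmorph_prod; apply: eq_bigr => m _.
rewrite rmorphXn rmorph_sum; congr (_ ^+ _); apply: eq_bigr => j _.
exact: map_polyXn.
Qed.

Lemma phi_pl k n : phi (pl k n) = (trunc k n : {poly 'Z_4})`_n.
Proof. by rewrite -map_trunc coef_map. Qed.

Definition Csum : {poly 'Z_4} := \sum_(i < 9) phi cpoly`_i *: 'X^i.

Lemma Csum_Cp : Csum = Cp.
Proof.
rewrite /Csum /Cp !big_ord_recr big_ord0 /= /phi.
rewrite -!mul_polyC !rmorph_int.
ring.
Qed.

Lemma Z4_nat (k : nat) : (k%:R : 'Z_4) = 0 -> (4 %| k)%N.
Proof. move=> /(congr1 val) /=. have := @val_Zp_nat 4 isT k. simpl. move=> ->. move=> H; by rewrite /dvdn H. Qed.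

Lemma Z4_modz (a b : int) : (a%:~R : 'Z_4) = b%:~R -> (a = b %[mod 4])%Z.
Proof.
move=> H; apply/eqP; rewrite eqz_mod_dvd dvdzE.
have : ((a - b)%:~R : 'Z_4) = 0 by rewrite intrB H subrr.
case: (a - b) => k /=.
- by move=> /Z4_nat.
- rewrite NegzE mulrNz => /eqP; rewrite oppr_eq0 => /eqP H2. exact: (Z4_nat H2).
Qed.

Lemma E_coef n k : (k <= n)%N ->
  ((trunc 2 n : {poly 'Z_4}) \Po 'X^2)`_k = phi (pl2_even k).
Proof.
move=> hk; rewrite coef_comp_poly_Xn // /pl2_even dvdn2 divn2.
case: (odd k) => /=; first by rewrite /phi.
rewrite phi_pl; apply: trunc_stable => //.
apply: leq_trans hk; rewrite -divn2; exact: leq_div.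
Qed.

Theorem mainTheorem6 : forall n : nat, (pl 4 n = rhs_coef n %[mod 4])%Z.
Proof.
move=> n; apply: Z4_modz; rewrite -/(phi _) -/(phi _) phi_pl.
set E := (trunc 2 n : {poly 'Z_4}) \Po 'X^2.
have key : eqm n (trunc 4 n) (Cp * E).
  apply: (@eqm_uniq _ _ _ _ (U 4 n)); first exact: trunc_inv.
  rewrite mulrC mulrA.
  apply: (@eqm_trans _ _ _ ((U 2 n \Po 'X^2) * E)).
    apply: eqm_mul => //.
    apply: (@eqm_trans _ _ _ (Cp * U 4 n.+3)).
      rewrite mulrC; apply: eqm_mul => //; apply: eqm_sym; by apply: U_shift; rewrite !leqW.
    rewrite step_id; apply: eqm_comp2; by apply: U_shift; rewrite !leqW.
  rewrite /E -comp_polyM mulrC -(comp1 ('X^2 : {poly 'Z_4})).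
  apply: eqm_comp2; exact: trunc_inv.
rewrite key // -Csum_Cp /Csum mulr_suml coef_sum.
rewrite /rhs_coef /phi rmorph_sum /= [RHS]big_mkcond /=; apply: eq_bigr => i _.
rewrite -mul_polyC -mulrA coefCM coefXnM ltnNge.
case hi: (i <= n)%N => /=; last by rewrite mulr0.
by rewrite /E E_coef ?leq_subr // /phi rmorphM.
Qed.
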